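(* Let $\lambda>1$. For all $\mu\in\mathscr P(\mathcal K)$ and $\pi\in\Delta_k$, $$\Psi^\lambda_\star(\mu)\le\frac{2^\lambda\,\Delta_\star(\mu)^{\lambda-1}\,\Delta(\pi,\mu)}{\mathrm I(\pi,\mu)},$$ in both the standard and Rustichini settings (with the conventions $0/0=0$ and $c/0=\infty$ for $c>0$).
   Context: A $k$-action partial monitoring game: set $\mathcal Z$, loss $\mathcal L:[k]\times\mathcal Z\to[0,1]$, signal $\mathcal S:[k]\times\mathcal Z\to\Sigma$, $k$ finite. $\mathcal K$ = finitely supported probability distributions on $\mathcal Z$; $\Delta_k$ = probability simplex on $[k]$; $\mathcal L(a,x)=\sum_z x(z)\mathcal L(a,z)$, $\mathcal L(\pi,x)=\sum_a\pi(a)\mathcal L(a,x)$; $\mathcal S(a,x)$ = law of $\mathcal S(a,z)$, $z\sim x$. Standard setting: $\mathcal Z$ arbitrary, $\mathcal V(\pi,x)=\mathcal L(\pi,x)$, $\mathcal V_\star(x)=\min_a\mathcal L(a,x)$. Rustichini setting: $\mathcal Z$ finite, $x\,\mathrm R\,y$ iff $\mathcal S(a,x)=\mathcal S(a,y)\ \forall a$, $\mathcal V(\pi,x)=\sup_{y\,\mathrm R\,x}\mathcal L(\pi,y)$, $\mathcal V_\star(x)=\min_{\pi\in\Delta_k}\mathcal V(\pi,x)$. $\mathscr P(\mathcal K)$ = finitely supported probability measures on $\mathcal K$. For $\mu\in\mathscr P(\mathcal K)$: $\mathcal S(a,\mu)=\mathcal S(a,\sum_x\mu(x)x)$; $\mathrm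 I(\pi,\mu)=\sum_a\pi(a)\sum_{x\in\operatorname{spt}\mu}\operatorname{KL}(\mathcal S(a,\mu),\mathcal S(a,x))$; $\Delta(\pi,\mu)=\sum_x\mu(x)(\mathcal V(\pi,x)-\mathcal V_\star(x))$; $\Delta_\star(\mu)=\min_{\pi\in\Delta_k}\Delta(\pi,\mu)$; $\Psi^\lambda(\pi,\mu)=\Delta(\pi,\mu)^\lambda/\mathrm I(\pi,\mu)$; $\Psi^\lambda_\star(\mu)=\inf_{\pi\in\Delta_k}\Psi^\lambda(\pi,\mu)$. *)

(* Defs.v *)
From HB Require Import structures.
From mathcomp Require Import all_boot all_order all_algebra.
From mathcomp Require Import finmap.
From mathcomp Require Import all_classical all_reals all_analysis.
Set Implicit Arguments. Unset Strict Implicit. Unset Printing Implicit Defensive.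
Import Order.TTheory GRing.Theory Num.Theory.
Local Open Scope ring_scope.
Local Open Scope fset_scope.

(* finitely supported real functions on T (candidate distributions) *)
Definition fdist (R : realType) (T : choiceType) := {fsfun T -> R with 0}.

Definition is_dist (R : realType) (T : choiceType) (x : fdist R T) : Prop :=
  (forall t, 0 <= x t) /\ \sum_(t <- finsupp x) x t = 1.

Definition is_pmeasure (R : realType) (Z : choiceType)
  (mu : {fsfun fdist R Z -> R with 0}) : Prop :=
  [/\ forall x, 0 <= mu x, \sum_(x <- finsupp mu) mu x = 1
    & forall x, x \in finsupp mu -> is_dist x].

Definition in_simplex (R : realType) (k : nat) (pi : 'I_k -> R) : Prop :=
  (forall a, 0 <= pi a) /\ \sum_(a < k) pi a = 1.

Definition lossx (R : realType) (Z : choiceType) (k : nat)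
  (L : 'I_k -> Z -> R) (a : 'I_k) (x : fdist R Z) : R :=
  \sum_(z <- finsupp x) x z * L a z.
Definition losspi (R : realType) (Z : choiceType) (k : nat)
  (L : 'I_k -> Z -> R) (pi : 'I_k -> R) (x : fdist R Z) : R :=
  \sum_(a < k) pi a * lossx L a x.

Definition law (R : realType) (Z Sigma : choiceType) (f : Z -> Sigma)
  (x : fdist R Z) : fdist R Sigma :=
  [fsfun s in [fset f z | z in finsupp x] => \sum_(z <- finsupp x | f z == s) x z].

Definition mixture (R : realType) (Z : choiceType)
  (mu : {fsfun fdist R Z -> R with 0}) : fdist R Z :=
  [fsfun z in \bigcup_(x <- finsupp mu) finsupp x =>
     \sum_(x <- finsupp mu) mu x * x z].

Definition KL (R : realType) (Sigma : choiceType) (p q : fdist R Sigma) : \bar R :=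
  if all (fun s => 0 < q s) (finsupp p)
  then (\sum_(s <- finsupp p) p s * ln (p s / q s))%:E
  else +oo%E.

Definition info (R : realType) (Z Sigma : choiceType) (k : nat)
  (S : 'I_k -> Z -> Sigma) (pi : 'I_k -> R)
  (mu : {fsfun fdist R Z -> R with 0}) : \bar R :=
  (\sum_(a < k) (pi a)%:E *
     \sum_(x <- finsupp mu) KL (law (S a) (mixture mu)) (law (S a) x))%E.

Definition gap (R : realType) (Z : choiceType) (k : nat)
  (V : ('I_k -> R) -> fdist R Z -> R) (Vstar : fdist R Z -> R)
  (pi : 'I_k -> R) (mu : {fsfun fdist R Z -> R with 0}) : R :=
  \sum_(x <- finsupp mu) mu x * (V pi x - Vstar x).

(* Delta_star(mu) = min over the simplex (attained; written as inf) *)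
Definition gapstar (R : realType) (Z : choiceType) (k : nat)
  (V : ('I_k -> R) -> fdist R Z -> R) (Vstar : fdist R Z -> R)
  (mu : {fsfun fdist R Z -> R with 0}) : R :=
  inf [set gap V Vstar pi mu | pi in [set pi | @in_simplex R k pi]].

Definition ediv (R : realType) (c : R) (d : \bar R) : \bar R :=
  if d == 0%E then (if c == 0 then 0%E else +oo%E)
  else if d == +oo%E then 0%E else (c / fine d)%:E.

Definition Psi (R : realType) (Z Sigma : choiceType) (k : nat) (lam : R)
  (V : ('I_k -> R) -> fdist R Z -> R) (Vstar : fdist R Z -> R)
  (S : 'I_k -> Z -> Sigma) (pi : 'I_k -> R)
  (mu : {fsfun fdist R Z -> R with 0}) : \bar R :=
  ediv (gap V Vstar pi mu `^ lam) (info S pi mu).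
Definition Psistar (R : realType) (Z Sigma : choiceType) (k : nat) (lam : R)
  (V : ('I_k -> R) -> fdist R Z -> R) (Vstar : fdist R Z -> R)
  (S : 'I_k -> Z -> Sigma) (mu : {fsfun fdist R Z -> R with 0}) : \bar R :=
  ereal_inf [set Psi lam V Vstar S pi mu | pi in [set pi | @in_simplex R k pi]].

Definition V_std (R : realType) (Z : choiceType) (k : nat)
  (L : 'I_k -> Z -> R) (pi : 'I_k -> R) (x : fdist R Z) : R := losspi L pi x.
Definition Vstar_std (R : realType) (Z : choiceType) (k : nat)
  (L : 'I_k -> Z -> R) (x : fdist R Z) : R :=
  inf [set lossx L a x | a in [set: 'I_k]].

Definition sigeq (R : realType) (Z Sigma : choiceType) (k : nat)
  (S : 'I_k -> Z -> Sigma) (x y : fdist R Z) : Prop :=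
  forall a, law (S a) x = law (S a) y.
Definition V_rus (R : realType) (Z Sigma : choiceType) (k : nat)
  (L : 'I_k -> Z -> R) (S : 'I_k -> Z -> Sigma)
  (pi : 'I_k -> R) (x : fdist R Z) : R :=
  sup [set losspi L pi y | y in [set y : fdist R Z | is_dist y /\ sigeq S y x]].
Definition Vstar_rus (R : realType) (Z Sigma : choiceType) (k : nat)
  (L : 'I_k -> Z -> R) (S : 'I_k -> Z -> Sigma) (x : fdist R Z) : R :=
  inf [set V_rus L S pi x | pi in [set pi | @in_simplex R k pi]].

(* Main.v *)
Require Import Defs.
From HB Require Import structures.
From mathcomp Require Import all_boot all_order all_algebra.
From mathcomp Require Import finmap.
From mathcomp Require Import all_classical all_reals all_analysis.
Import Order.TTheory GRing.Theory Num.Theory.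
Import numFieldNormedType.Exports.
Local Open Scope ring_scope.
Local Open Scope classical_set_scope.

Lemma lip_cont (R : realType) n (f : 'rV[R]_n -> R) (C : R) :
  (forall u v, `|f u - f v| <= C * `|u - v|) -> continuous f.
Proof.
move=> H x.
have FF : Filter (nbhs x) by apply: nbhs_filter.
apply/cvgrPdist_lt => e e0.
have C1 : 0 < `|C| + 1 by rewrite ltr_pwDr // normr_ge0.
near=> t.
apply: (le_lt_trans (H x t)).
apply: (le_lt_trans (y := (`|C| + 1) * `|x - t|)).
  apply: ler_wpM2r; first exact: normr_ge0.
  by apply: (le_trans (ler_norm C)); rewrite lerDl.
rewrite -ltr_pdivlMl // mulrC.
near: t.
exact: (@cvgr_dist_lt _ _ _ (nbhs x) FF id x (fun A h => h) _ (divr_gt0 e0 C1)).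
Unshelve. all: by end_near.
Qed.

Lemma coord_le (R : realType) n (u : 'rV[R]_n) a : `|u ord0 a| <= `|u|.
Proof.
rewrite [leRHS]/Num.norm /= mx_normrE.
have := @le_bigmax _ _ _ 0 (fun ij : 'I_1 * 'I_n => `|u ij.1 ij.2|) (ord0, a).
by [].
Qed.

Lemma sum_coord_le (R : realType) n (u v : 'rV[R]_n) :
  \sum_a `|u ord0 a - v ord0 a| <= n%:R * `|u - v|.
Proof.
apply: (le_trans (y := \sum_(a < n) `|u - v|)).
  by apply: ler_sum => a _; have := @coord_le R n (u - v) a; rewrite !mxE.
by rewrite sumr_const card_ord mulr_natl.
Qed.

Lemma le_sum_single (R : realType) n (F : 'I_n -> R) i :
  (forall j, 0 <= F j) -> F i <= \sum_j F j.
Proof.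
move=> F0; rewrite (bigD1 i) //= lerDl; exact: sumr_ge0.
Qed.

Lemma simplex_min (R : realType) k (G : ('I_k -> R) -> R) (pi0 : 'I_k -> R) :
  in_simplex pi0 ->
  (forall p q, `|G p - G q| <= \sum_a `|p a - q a|) ->
  exists2 ps : 'I_k -> R, in_simplex ps & forall p : 'I_k -> R, in_simplex p -> G ps <= G p.
Proof.
move=> hpi0 HG.
pose toF := fun (v : 'rV[R]_k) (a : 'I_k) => v ord0 a.
have toFrow : forall p, toF (\row_a p a) = p.
  by move=> p; apply: funext => a; rewrite /toF mxE.
pose A := [set v | in_simplex (toF v)].
have lipF : forall u v, `|(G \o toF) u - (G \o toF) v| <= k%:R * `|u - v|.
  by move=> u v; apply: le_trans (HG _ _) _; exact: sum_coord_le.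
have cont : continuous (G \o toF) by apply: lip_cont lipF.
have A0 : A !=set0 by exists (\row_a pi0 a); rewrite /A /= toFrow.
have Acl : closed A.
  have -> : A = (\bigcap_(a in setT) [set v : 'rV[R]_k | 0 <= v ord0 a])
      `&` [set v | \sum_a v ord0 a = 1].
    apply/seteqP; split => v /=.
      by case=> h1 h2; split => // a _; exact: h1.
    by case=> h1 h2; split => // a; exact: h1.
  apply: closedI.
    apply: closed_bigI => a _.
    apply: (@preimage_closed _ _ (fun v : 'rV[R]_k => v ord0 a) [set x | 0 <= x]).
      by move=> x _; exact: coord_continuous.
    exact: closed_ge.
  apply: (@preimage_closed _ _ (fun v : 'rV[R]_k => \sum_a v ord0 a) [set x | x = 1]).
    have sc : continuous (fun v : 'rV[R]_k => \sum_a v ord0 a).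
      apply: (@lip_cont R k _ k%:R) => u v.
      apply: le_trans _ (@sum_coord_le R k u v).
      by rewrite -sumrB; exact: ler_norm_sum.
    by move=> x _; exact: sc.
  exact: closed_eq.
have Acomp : compact A.
  have Bc : compact [set v : 'rV[R]_k | forall i, `[0, 1]%classic (v ord0 i)].
    exact: (@rV_compact R k (fun=> `[0, 1]%classic) (fun=> @segment_compact R 0 1)).
  apply: (subclosed_compact Acl Bc).
  move=> v [h1 h2] i /=; rewrite in_itv /= h1 /= -h2.
  exact: (@le_sum_single R k (toF v) i h1).
have [c cA cmin] := EVT_min_rV A0 Acomp (continuous_subspaceT cont).
rewrite inE in cA.
exists (toF c) => // p hp.
have := cmin (\row_a p a); rewrite /= toFrow; apply.
by rewrite inE /A /= toFrow.
Qed.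
From mathcomp Require Import ring lra.
Local Open Scope fset_scope.

Section KLsec.
Variable R : realType.

Lemma le_sum_seq_single (T : eqType) (r : seq T) (P : pred T) (F : T -> R) i :
  uniq r -> i \in r -> P i -> (forall j, j \in r -> 0 <= F j) ->
  F i <= \sum_(j <- r | P j) F j.
Proof.
move=> ur ir Pi F0.
rewrite big_mkcond (bigD1_seq i) //= Pi lerDl.
rewrite big_seq_cond; apply: sumr_ge0 => j /andP[jr _].
by case: ifP => // _; exact: F0.
Qed.

Lemma le_sum_filter (T : eqType) (r : seq T) (P : pred T) (F : T -> R) :
  (forall j, j \in r -> 0 <= F j) ->
  \sum_(j <- r | P j) F j <= \sum_(j <- r) F j.
Proof.
move=> F0; rewrite big_mkcond /= [leRHS]big_seq [leLHS]big_seq.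
by apply: ler_sum => j jr; case: ifP => // _; exact: F0.
Qed.

Lemma lawE (Z S : choiceType) (f : Z -> S) (x : fdist R Z) s :
  law f x s = \sum_(z <- finsupp x | f z == s) x z.
Proof.
rewrite /law fsfun_fun; case: ifP => // /negbT hs.
apply/esym/big1_seq => z /andP[/eqP e zx].
by move: hs; rewrite -e in_imfset.
Qed.

Lemma law_ge0 (Z S : choiceType) (f : Z -> S) (x : fdist R Z) s :
  (forall z, 0 <= x z) -> 0 <= law f x s.
Proof. by move=> h; rewrite lawE; apply: sumr_ge0. Qed.

Lemma sum_law (Z S : choiceType) (f : Z -> S) (x : fdist R Z) (B : seq S) :
  uniq B ->
  \sum_(s <- B) law f x s = \sum_(z <- finsupp x | f z \in B) x z.
Proof.
move=> uB.
transitivity (\sum_(s <- B) \sum_(z <- finsupp x) (if f z == s then x z else 0)).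
  by apply: eq_bigr => s _; rewrite lawE big_mkcond.
rewrite exchange_big /= [RHS]big_mkcond /=; apply: eq_bigr => z _.
rewrite -big_mkcond /=.
case: (boolP (f z \in B)) => h.
  rewrite (eq_bigl (pred1 (f z))) => [|s]; last by rewrite /= eq_sym.
  by rewrite -big_filter filter_pred1_uniq // big_seq1.
apply: big1_seq => s /andP[/eqP e sB].
by move: h; rewrite e sB.
Qed.

Lemma sum_law_supp (Z S : choiceType) (f : Z -> S) (x : fdist R Z) :
  (forall z, 0 <= x z) ->
  \sum_(s <- finsupp (law f x)) law f x s = \sum_(z <- finsupp x) x z.
Proof.
move=> x0; rewrite sum_law ?fset_uniq //.
rewrite big_seq_cond [RHS]big_seq; apply: eq_bigl => z.
case: (boolP (z \in finsupp x)) => //= zx.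
rewrite mem_finsupp lawE /=.
have xz : 0 < x z by rewrite lt_neqAle eq_sym x0 andbT; rewrite mem_finsupp in zx.
apply/negP => /eqP h.
have := @le_sum_seq_single _ (finsupp x) (fun z' => f z' == f z) x z
  (fset_uniq (finsupp x)) zx (eqxx _) (fun j _ => x0 j).
by rewrite h => /(lt_le_trans xz); rewrite ltxx.
Qed.

Lemma sum_law_le (Z S : choiceType) (f : Z -> S) (x : fdist R Z) (B : {fset S}) :
  (forall z, 0 <= x z) ->
  \sum_(s <- B) law f x s <= \sum_(z <- finsupp x) x z.
Proof.
move=> x0; rewrite sum_law ?fset_uniq //.
by apply: le_sum_filter => j _.
Qed.

Lemma KL_ge0 (S : choiceType) (p q : fdist R S) :
  (forall s, 0 <= p s) -> \sum_(s <- finsupp p) p s = 1 ->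
  (forall s, 0 <= q s) -> \sum_(s <- finsupp p) q s <= 1 ->
  (0 <= KL p q)%E.
Proof.
move=> p0 hp q0 hq; rewrite /KL; case: ifP => [/allP hq'|_] //; rewrite lee_fin.
apply: (le_trans (y := \sum_(s <- finsupp p) (p s - q s))).
  by rewrite sumrB hp subr_ge0.
rewrite big_seq [leRHS]big_seq; apply: ler_sum => s sp.
have ps : 0 < p s.
  by rewrite lt_neqAle eq_sym p0 andbT; rewrite mem_finsupp in sp.
have qs : 0 < q s := hq' s sp.
have hln : ln (q s / p s) <= q s / p s - 1.
  have := @le_ln1Dx R (q s / p s - 1).
  rewrite [(1 + _)%R]addrC subrK; apply.
  have : 0 < q s / p s := divr_gt0 qs ps; lra.
have h : p s * ln (q s / p s) <= q s - p s.
  apply: le_trans (ler_wpM2l (ltW ps) hln) _.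
  by rewrite mulrBr mulr1 mulrC divfK ?gt_eqF.
rewrite -invf_div lnV ?posrE ?divr_gt0 // mulrN.
lra.
Qed.

End KLsec.

Section Mix.
Variable R : realType.

Lemma pos_of_supp (T : choiceType) (x : {fsfun T -> R with 0}) z :
  (forall t, 0 <= x t) -> z \in finsupp x -> 0 < x z.
Proof.
by move=> x0 zx; rewrite lt_neqAle eq_sym x0 andbT; rewrite mem_finsupp in zx.
Qed.

Lemma mixE (Z : choiceType) (mu : {fsfun fdist R Z -> R with 0}) z :
  mixture mu z = \sum_(x <- finsupp mu) mu x * x z.
Proof.
rewrite /mixture fsfun_fun; case: ifP => // /negbT hz.
apply/esym/big1_seq => x /andP[_ xm].
suff -> : x z = 0 by rewrite mulr0.
apply: fsfun_dflt; apply: contra hz => zx.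
by move: zx; apply/fsubsetP; exact: bigfcup_sup.
Qed.

Lemma mix_ge0 (Z : choiceType) (mu : {fsfun fdist R Z -> R with 0}) z :
  is_pmeasure mu -> 0 <= mixture mu z.
Proof.
case=> m0 _ md; rewrite mixE big_seq; apply: sumr_ge0 => x xm.
by apply: mulr_ge0 => //; case: (md x xm).
Qed.

Lemma mix_sum (Z : choiceType) (mu : {fsfun fdist R Z -> R with 0}) :
  is_pmeasure mu -> \sum_(z <- finsupp (mixture mu)) mixture mu z = 1.
Proof.
move=> hmu; have [m0 ms md] := hmu.
under eq_bigr do rewrite mixE.
rewrite exchange_big /= -[RHS]ms big_seq [RHS]big_seq; apply: eq_bigr => x xm.
rewrite -mulr_sumr.
have [x0 xs] := md x xm.
suff -> : \sum_(i <- finsupp (mixture mu)) x i = 1 by rewrite mulr1.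
rewrite -xs; apply/esym/big_fset_incl.
  apply/fsubsetP => z zx; rewrite mem_finsupp mixE /=.
  have := @le_sum_seq_single R _ (finsupp mu) xpredT (fun x' => mu x' * x' z) x
    (fset_uniq _) xm erefl.
  have hpos : 0 < mu x * x z.
    by rewrite mulr_gt0 // pos_of_supp.
  move=> /(_ _) H; apply/negP => /eqP h.
  have H' := H (fun j jm => mulr_ge0 (m0 j) ((md j jm).1 z)).
  by move: H'; rewrite h leNgt hpos.
by move=> z _ zx; exact: fsfun_dflt.
Qed.

Lemma Ksum_ge0 (Z Sigma : choiceType) (f : Z -> Sigma)
  (mu : {fsfun fdist R Z -> R with 0}) :
  is_pmeasure mu ->
  (0 <= \sum_(x <- finsupp mu) KL (law f (mixture mu)) (law f x))%E.
Proof.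
move=> hmu; have [m0 ms md] := hmu.
rewrite big_seq; apply: sume_ge0 => x xm.
have [x0 xs] := md x xm.
apply: KL_ge0.
- by move=> s; apply: law_ge0 => z; exact: mix_ge0.
- by rewrite sum_law_supp ?mix_sum // => z; exact: mix_ge0.
- by move=> s; apply: law_ge0.
- by rewrite -xs; apply: sum_law_le.
Qed.

Lemma info_ge0 (Z Sigma : choiceType) k (S : 'I_k -> Z -> Sigma) (pi : 'I_k -> R)
  (mu : {fsfun fdist R Z -> R with 0}) :
  is_pmeasure mu -> (forall a, 0 <= pi a) -> (0 <= info S pi mu)%E.
Proof.
move=> hmu pi0; have [m0 ms md] := hmu.
rewrite /info; apply: sume_ge0 => a _; apply: mule_ge0; first by rewrite lee_fin.
rewrite big_seq; apply: sume_ge0 => x xm.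
have [x0 xs] := md x xm.
apply: KL_ge0.
- by move=> s; apply: law_ge0 => z; exact: mix_ge0.
- by rewrite sum_law_supp ?mix_sum // => z; exact: mix_ge0.
- by move=> s; apply: law_ge0.
- by rewrite -xs; apply: sum_law_le.
Qed.

End Mix.

Local Open Scope ring_scope.
Section Generic.
Variable R : realType.

Lemma ediv_ge0 (c : R) (d : \bar R) : 0 <= c -> (0 <= d)%E -> (0 <= ediv c d)%E.
Proof.
move=> c0 d0; rewrite /ediv; case: ifP => _; first by case: ifP.
case: ifP => // _; rewrite lee_fin divr_ge0 //.
by case: d d0 => //= r; rewrite lee_fin.
Qed.

Lemma gen_main (lam : R) (hlam : 1 < lam) (Z Sigma : choiceType) (k : nat)
  (V : ('I_k -> R) -> fdist R Z -> R) (Vstar : fdist R Z -> R)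
  (S : 'I_k -> Z -> Sigma) (mu : {fsfun fdist R Z -> R with 0})
  (pi : 'I_k -> R) :
  is_pmeasure mu -> in_simplex pi ->
  (forall (p q : 'I_k -> R) (t : R) x, in_simplex p -> in_simplex q -> 0 <= t <= 1 ->
     x \in finsupp mu ->
     V (fun a => (1 - t) * p a + t * q a) x <= (1 - t) * V p x + t * V q x) ->
  (forall (p q : 'I_k -> R) x, x \in finsupp mu ->
     `|V p x - V q x| <= \sum_a `|p a - q a|) ->
  (forall (p : 'I_k -> R) x, in_simplex p -> x \in finsupp mu -> Vstar x <= V p x) ->
  (Psistar lam V Vstar S mu <=
   ediv (2 `^ lam * gapstar V Vstar mu `^ (lam - 1) * gap V Vstar pi mu)
        (info S pi mu))%E.
Proof.
move=> hmu hpi Hconv Hlip Hge.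
have [m0 ms md] := hmu.
pose G := fun p => gap V Vstar p mu.
have Glip : forall p q, `|G p - G q| <= \sum_a `|p a - q a|.
  move=> p q; rewrite /G /gap -sumrB.
  apply: le_trans (ler_norm_sum _ _ _) _.
  apply: (le_trans (y := \sum_(x <- finsupp mu) mu x * \sum_a `|p a - q a|)).
    rewrite big_seq [leRHS]big_seq; apply: ler_sum => x xm.
    rewrite -mulrBr normrM ger0_norm //; apply: ler_wpM2l => //.
    by rewrite opprB addrA subrK; exact: Hlip.
  by rewrite -mulr_suml ms mul1r.
have [ps hps psmin] := @simplex_min R k G pi hpi Glip.
have Gge0 : forall p, in_simplex p -> 0 <= G p.
  move=> p hp; rewrite /G /gap big_seq; apply: sumr_ge0 => x xm.
  by apply: mulr_ge0 => //; rewrite subr_ge0; exact: Hge.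
have gs : gapstar V Vstar mu = G ps.
  rewrite /gapstar; apply/le_anti/andP; split.
    apply: ge_inf; last by exists ps.
    by exists 0 => y [p hp <-]; exact: Gge0.
  apply: lb_le_inf; first by exists (G ps), ps.
  by move=> y [p hp <-]; exact: psmin.
have Psistar_le : forall p, in_simplex p ->
    (Psistar lam V Vstar S mu <= Psi lam V Vstar S p mu)%E.
  by move=> p hp; apply: ereal_inf_lbound; exists p.
have lam0 : lam != 0 by rewrite gt_eqF // (lt_trans ltr01).
have Psi0 : forall p, G p = 0 -> Psi lam V Vstar S p mu = 0%E.
  move=> p hp; rewrite /Psi -/(G p) hp powR0 // /ediv eqxx.
  by case: ifP => // _; case: ifP => // _; rewrite mul0r.
rewrite gs.
set d := G ps; set D := gap V Vstar pi mu.
have d0 : 0 <= d by exact: Gge0.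
have dD : d <= D by exact: psmin.
have D0 : 0 <= D by exact: le_trans dD.
have c0 : 0 <= 2 `^ lam * d `^ (lam - 1) * D.
  by rewrite mulr_ge0 // mulr_ge0 // powR_ge0.
have I0 := @info_ge0 R _ _ _ S _ _ hmu hpi.1.
have [d00|dpos] := eqVneq d 0.
  apply: le_trans (Psistar_le ps hps) _; rewrite Psi0 //.
  exact: ediv_ge0.
have dgt0 : 0 < d by rewrite lt_neqAle eq_sym dpos d0.
have Dgt0 : 0 < D by exact: lt_le_trans dD.
have cgt0 : 0 < 2 `^ lam * d `^ (lam - 1) * D.
  by rewrite mulr_gt0 // mulr_gt0 // powR_gt0.
case EI : (info S pi mu) I0 => [r| |] // I0.
- have [r0|rpos] := eqVneq r 0.
    by rewrite r0 /ediv eqxx gt_eqF // leey.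
  have rgt0 : 0 < r by rewrite lt_neqAle eq_sym rpos -lee_fin.
  have -> : ediv (2 `^ lam * d `^ (lam - 1) * D) r%:E =
      ((2 `^ lam * d `^ (lam - 1) * D) / r)%:E.
    by rewrite /ediv eqe (negbTE rpos).
  pose t := d / D.
  have t0 : 0 < t by rewrite divr_gt0.
  have t1 : t <= 1 by rewrite ler_pdivrMr // mul1r.
  have tD : t * D = d by rewrite divfK ?gt_eqF.
  pose pt := fun a => (1 - t) * ps a + t * pi a.
  have hpt : in_simplex pt.
    split.
      move=> a; apply: addr_ge0; apply: mulr_ge0.
      - by rewrite subr_ge0.
      - exact: hps.1.
      - exact: ltW.
      - exact: hpi.1.
    rewrite /pt big_split /= -!mulr_sumr hps.2 hpi.2 !mulr1.
    by rewrite subrK.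
  have Gpt : G pt <= 2 * d.
    apply: (le_trans (y := (1 - t) * d + t * D)).
      rewrite /G /gap /d /G /gap.
      rewrite !mulr_sumr -big_split /= big_seq [leRHS]big_seq.
      apply: ler_sum => x xm.
      rewrite mulrCA [X in _ <= _ + X]mulrCA -mulrDr; apply: ler_wpM2l => //.
      rewrite (_ : (1 - t) * (V ps x - Vstar x) + t * (V pi x - Vstar x) =
                   (1 - t) * V ps x + t * V pi x - Vstar x); last by ring.
      rewrite lerD2r; apply: Hconv => //.
      by rewrite (ltW t0) t1.
    rewrite tD mulrBl mul1r.
    have : 0 <= t * d by rewrite mulr_ge0 // ltW.
    lra.
  have Ipt : (t%:E * info S pi mu <= info S pt mu)%E.
    rewrite /info ge0_sume_distrr; last first.
      move=> a _; apply: mule_ge0; first by rewrite lee_fin; exact: hpi.1.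
      exact: Ksum_ge0.
    apply: lee_sum => a _; rewrite muleA -EFinM.
    apply: lee_wpmul2r; first exact: Ksum_ge0.
    rewrite lee_fin /pt addrC lerDl mulr_ge0 //; last exact: hps.1.
    by rewrite subr_ge0.
  rewrite EI in Ipt.
  case EIt : (info S pt mu) Ipt => [u| |] Ipt.
  + have ugt : t * r <= u by rewrite -lee_fin EFinM.
    have u0 : 0 < u by apply: lt_le_trans ugt; rewrite mulr_gt0.
    apply: le_trans (Psistar_le pt hpt) _.
    rewrite /Psi -/(G pt) EIt /ediv eqe (gt_eqF u0) /= lee_fin.
    apply: (le_trans (y := (2 * d) `^ lam / (t * r))).
      apply: ler_pM.
      - exact: powR_ge0.
      - by rewrite invr_ge0 ltW.
      - apply: ge0_ler_powR => //.
        + exact: le_trans (ltW ltr01) (ltW hlam).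
        + by rewrite nnegrE; exact: Gge0.
        + by rewrite nnegrE mulr_ge0.
      - by rewrite lef_pV2 ?posrE // mulr_gt0.
    have dl : d `^ lam = d `^ (lam - 1) * d.
      have := @powRD R d (lam - 1) 1; rewrite subrK => ->.
        by rewrite powRr1.
      by rewrite dpos implybT.
    rewrite powRM // dl /t.
    rewrite le_eqVlt; apply/orP; left; apply/eqP; field.
    by rewrite dpos rpos gt_eqF.
  + apply: le_trans (Psistar_le pt hpt) _.
    rewrite /Psi EIt /ediv /=.
    by rewrite lee_fin divr_ge0 // ltW.
  + by have := @info_ge0 R _ _ _ S pt mu hmu hpt.1; rewrite EIt.
- have E0 : forall c : R, ediv c +oo%E = 0%E by move=> c; rewrite /ediv.
  rewrite E0; apply: le_trans (Psistar_le pi hpi) _.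
  by rewrite /Psi EI E0.
Qed.

End Generic.

Section Inst.
Variable R : realType.

Lemma lossx_bnd {Z : choiceType} {k} {L : 'I_k -> Z -> R} {x : fdist R Z} a :
  is_dist x -> (forall a z, 0 <= L a z <= 1) -> 0 <= lossx L a x <= 1.
Proof.
move=> [x0 xs] HL; apply/andP; split.
  by apply: sumr_ge0 => z _; rewrite mulr_ge0 // (andP (HL a z)).1.
rewrite -xs; apply: ler_sum => z _.
by rewrite ler_piMr // (andP (HL a z)).2.
Qed.

Lemma losspi_lip {Z : choiceType} {k} {L : 'I_k -> Z -> R} {x : fdist R Z} p q :
  is_dist x -> (forall a z, 0 <= L a z <= 1) ->
  `|losspi L p x - losspi L q x| <= \sum_a `|p a - q a|.
Proof.
move=> hx HL; rewrite /losspi -sumrB.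
apply: le_trans (ler_norm_sum _ _ _) _; apply: ler_sum => a _.
rewrite -mulrBl normrM.
have /andP[l0 l1] := lossx_bnd a hx HL.
by rewrite ler_piMr // ger0_norm.
Qed.

Lemma losspi_conv {Z : choiceType} {k} {L : 'I_k -> Z -> R} {x : fdist R Z}
  (p q : 'I_k -> R) (t : R) :
  losspi L (fun a => (1 - t) * p a + t * q a) x =
  (1 - t) * losspi L p x + t * losspi L q x.
Proof.
rewrite /losspi !mulr_sumr -big_split /=; apply: eq_bigr => a _; ring.
Qed.

Lemma losspi_ge0 {Z : choiceType} {k} {L : 'I_k -> Z -> R} {x : fdist R Z} {p} :
  is_dist x -> (forall a z, 0 <= L a z <= 1) -> in_simplex p ->
  0 <= losspi L p x.
Proof.
move=> hx HL [p0 _]; apply: sumr_ge0 => a _.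
by rewrite mulr_ge0 // (andP (lossx_bnd a hx HL)).1.
Qed.

Lemma std_case (lam : R) (hlam : 1 < lam) (Z Sigma : choiceType) (k : nat)
     (L : 'I_k -> Z -> R) (S : 'I_k -> Z -> Sigma) :
     (forall a z, 0 <= L a z <= 1) ->
     forall (mu : {fsfun fdist R Z -> R with 0}) (pi : 'I_k -> R),
     is_pmeasure mu -> in_simplex pi ->
     (Psistar lam (V_std L) (Vstar_std L) S mu <=
      ediv (2 `^ lam * gapstar (V_std L) (Vstar_std L) mu `^ (lam - 1)
              * gap (V_std L) (Vstar_std L) pi mu)
           (info S pi mu))%E.
Proof.
move=> HL mu pi hmu hpi; have [m0 ms md] := hmu.
apply: gen_main => //.
- move=> p q t x _ _ _ _; rewrite /V_std losspi_conv //.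
- by move=> p q x xm; apply: losspi_lip => //; exact: md.
- move=> p x [p0 ps] xm; rewrite /V_std /Vstar_std.
  have hx := md x xm.
  set m := inf _.
  have ml : forall a, m <= lossx L a x.
    move=> a; apply: ge_inf; last by exists a.
    exists 0 => y [b _ <-]; exact: (andP (lossx_bnd b hx HL)).1.
  apply: (le_trans (y := \sum_a p a * m)).
    by rewrite -mulr_suml ps mul1r.
  by apply: ler_sum => a _; apply: ler_wpM2l.
Qed.

Lemma rus_case (lam : R) (hlam : 1 < lam) (Z : finType) (Sigma : choiceType) (k : nat)
     (L : 'I_k -> Z -> R) (S : 'I_k -> Z -> Sigma) :
     (forall a z, 0 <= L a z <= 1) ->
     forall (mu : {fsfun fdist R Z -> R with 0}) (pi : 'I_k -> R),
     is_pmeasure mu -> in_simplex pi ->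
     (Psistar lam (V_rus L S) (Vstar_rus L S) S mu <=
      ediv (2 `^ lam * gapstar (V_rus L S) (Vstar_rus L S) mu `^ (lam - 1)
              * gap (V_rus L S) (Vstar_rus L S) pi mu)
           (info S pi mu))%E.
Proof.
move=> HL mu pi hmu hpi; have [m0 ms md] := hmu.
have Yne : forall (p : 'I_k -> R) (x : fdist R Z), is_dist x ->
    [set losspi L p y | y in [set y : fdist R Z | is_dist y /\ sigeq S y x]] !=set0.
  by move=> p x hx; exists (losspi L p x), x.
have Yub : forall (p : 'I_k -> R) (x : fdist R Z),
    has_ubound [set losspi L p y | y in [set y : fdist R Z | is_dist y /\ sigeq S y x]].
  move=> p x; exists (\sum_a `|p a|) => _ [y [hy _] <-].
  have H := losspi_lip (fun=> 0) p hy HL.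
  have e1 : losspi L (fun=> 0) y = 0.
    by rewrite /losspi big1 // => a _; rewrite mul0r.
  have e2 : \sum_a `|(fun=> 0 : R) a - p a| = \sum_a `|p a|.
    by apply: eq_bigr => a _; rewrite /= sub0r normrN.
  rewrite e1 e2 sub0r normrN in H.
  exact: le_trans (ler_norm _) H.
have Vub : forall (p : 'I_k -> R) (x y : fdist R Z), is_dist y -> sigeq S y x ->
    losspi L p y <= V_rus L S p x.
  by move=> p x y hy hs; apply: ub_le_sup (Yub p x) _ _; exists y.
apply: gen_main => //.
- move=> p q t x hp hq /andP[t0 t1] xm; have hx := md x xm.
  apply: ge_sup; first exact: Yne.
  move=> _ [y [hy hs] <-]; rewrite losspi_conv.
  apply: lerD; apply: ler_wpM2l; rewrite ?subr_ge0 //; exact: Vub.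
- move=> p q x xm; have hx := md x xm.
  have key : forall p1 p2 : 'I_k -> R,
      V_rus L S p1 x <= V_rus L S p2 x + \sum_a `|p1 a - p2 a|.
    move=> p1 p2; apply: ge_sup; first exact: Yne.
    move=> _ [y [hy hs] <-].
    have := losspi_lip p1 p2 hy HL; rewrite ler_norml => /andP[_ h].
    have := Vub p2 x y hy hs; lra.
  have k1 := key p q; have k2 := key q p.
  have e : \sum_a `|q a - p a| = \sum_a `|p a - q a|.
    by apply: eq_bigr => a _; rewrite distrC.
  rewrite e in k2.
  rewrite ler_norml; apply/andP; split; lra.
- move=> p x hp xm; have hx := md x xm; rewrite /Vstar_rus.
  apply: ge_inf; last by exists p.
  exists 0 => _ [p' hp' <-].
  apply: le_trans (losspi_ge0 hx HL hp') _.
  by apply: Vub => // a.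
Qed.

End Inst.

Theorem lemma2 (R : realType) (lam : R) (hlam : 1 < lam) :
  (* standard setting *)
  (forall (Z Sigma : choiceType) (k : nat)
     (L : 'I_k -> Z -> R) (S : 'I_k -> Z -> Sigma),
     (forall a z, 0 <= L a z <= 1) ->
     forall (mu : {fsfun fdist R Z -> R with 0}) (pi : 'I_k -> R),
     is_pmeasure mu -> in_simplex pi ->
     (Psistar lam (V_std L) (Vstar_std L) S mu <=
      ediv (2 `^ lam * gapstar (V_std L) (Vstar_std L) mu `^ (lam - 1)
              * gap (V_std L) (Vstar_std L) pi mu)
           (info S pi mu))%E)
  /\
  (* Rustichini setting *)
  (forall (Z : finType) (Sigma : choiceType) (k : nat)
     (L : 'I_k -> Z -> R) (S : 'I_k -> Z -> Sigma),
     (forall a z, 0 <= L a z <= 1) ->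
     forall (mu : {fsfun fdist R Z -> R with 0}) (pi : 'I_k -> R),
     is_pmeasure mu -> in_simplex pi ->
     (Psistar lam (V_rus L S) (Vstar_rus L S) S mu <=
      ediv (2 `^ lam * gapstar (V_rus L S) (Vstar_rus L S) mu `^ (lam - 1)
              * gap (V_rus L S) (Vstar_rus L S) pi mu)
           (info S pi mu))%E).
Proof.
split; [exact: std_case | exact: rus_case].
Qed.
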